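(* Let $m\ge3$, let $\lambda=\{\mu_{\mathbf a},\mu_{\mathbf b},\mu_{\mathbf c}\}$ be a D-J class over $P_m$ and $J=(j_1,\dots,j_m)\in\mathbb{Z}_{>0}^m$. Then $$|\tilde E(\lambda,J)|=(2^{|\mu_{\mathbf a}|-1})^{w_{\mathbf a}}+(2^{|\mu_{\mathbf b}|-1})^{w_{\mathbf b}}+(2^{|\mu_{\mathbf c}|-1})^{w_{\mathbf c}}-2,$$ where $w_i=0$ if $\mu_i=\varnothing$ and $w_i=\sum_{k\in\mu_i}(j_k-1)$ otherwise.
   Context: $P_m$ is the simplicial complex on $[m]$ with facets $\{i,i+1\}$ mod $m$. A D-J class over $P_m$ is an unordered weak partition $\lambda=\{\mu_{\mathbf a},\mu_{\mathbf b},\mu_{\mathbf c}\}$ of $[m]$ (parts may be empty) into non-consecutive sets (no part contains $\{i,i+1\bmod m\}$); $p,q$ are $\lambda$-equivalent if they lie in the same part. An e-set compatible with $\lambda$ is $(p,S)$ with $p\in[m]$, $S\subseteq[m]$ of even cardinality, and $\{p\}\cup S$ contained in one part. Two such e-sets $(p,S),(q,T)$ are type 1 $\lambda$-related if $S=\varnothing$ or $T=\varnothing$ or $p,q$ are $\lambda$-equivalent. $\tilde E(\lambda,J)$ is the set of sequences $(1,S^1_1),\dots,(1,S^1_{j_1-1}),(2,S^2_1),\dots,(2,S^2_{j_2-1}),\dots,(m,S^m_1),\dots,(m,S^m_{j_m-1})$ of e-sets compatible with $\lambda$ whose members are pairwise type 1 $\lambda$-related. *)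

(* Defs.v *)
(* Vertices [m] = {1,...,m} are modelled by 'I_m = {0,...,m-1};
   consecutive means {i, ordS i} (successor mod m). *)
From mathcomp Require Import all_boot.
Set Implicit Arguments. Unset Strict Implicit. Unset Printing Implicit Defensive.

Definition noncons (m : nat) (A : {set 'I_m}) : bool :=
  [forall i : 'I_m, ~~ ((i \in A) && (ordS i \in A))].

Definition DJ_class (m : nat) (a b c : {set 'I_m}) : bool :=
  [&& [disjoint a & b], [disjoint a & c], [disjoint b & c],
      a :|: b :|: c == [set: 'I_m],
      noncons a, noncons b & noncons c].

Definition lam_equiv (m : nat) (a b c : {set 'I_m}) (p q : 'I_m) : bool :=
  [|| (p \in a) && (q \in a), (p \in b) && (q \in b) | (p \in c) && (q \in c)].

Definition eset_compat (m : nat) (a b c : {set 'I_m}) (e : 'I_m * {set 'I_m}) : bool :=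
  ~~ odd #|e.2| &&
  [|| (e.1 \in a) && (e.2 \subset a), (e.1 \in b) && (e.2 \subset b)
    | (e.1 \in c) && (e.2 \subset c)].

Definition type1_rel (m : nat) (a b c : {set 'I_m}) (e f : 'I_m * {set 'I_m}) : bool :=
  [|| e.2 == set0, f.2 == set0 | lam_equiv a b c e.1 f.1].

Definition Elen (m : nat) (J : 'I_m -> nat) : nat := \sum_(k < m) (J k).-1.

Definition Epattern (m : nat) (J : 'I_m -> nat) : seq 'I_m :=
  flatten [seq nseq (J k).-1 k | k <- enum 'I_m].

Definition in_Etilde (m : nat) (a b c : {set 'I_m}) (J : 'I_m -> nat)
  (s : (Elen J).-tuple ('I_m * {set 'I_m})) : bool :=
  [&& [seq e.1 | e <- s] == Epattern J,
      all (eset_compat a b c) s &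
      pairwise (type1_rel a b c) s].

Definition Etilde (m : nat) (a b c : {set 'I_m}) (J : 'I_m -> nat)
  : {set (Elen J).-tuple ('I_m * {set 'I_m})} :=
  [set s | @in_Etilde m a b c J s].

Definition wpart (m : nat) (J : 'I_m -> nat) (X : {set 'I_m}) : nat :=
  if X == set0 then 0 else \sum_(k in X) (J k).-1.

(* Main.v *)
Require Import Defs.
From mathcomp Require Import all_boot zify.
Set Implicit Arguments. Unset Strict Implicit.

Lemma toggle_card (T : finType) (x0 : T) (S : {set T}) :
  #|if x0 \in S then S :\ x0 else x0 |: S| = (if x0 \in S then #|S|.-1 else #|S|.+1).
Proof.
case: ifP => h.
- by rewrite (cardsD1 x0 S) h.
- by rewrite cardsU1 h.
Qed.

Lemma even_subsets (T : finType) (X : {set T}) :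
  #|[set S in powerset X | ~~ odd #|S|]| = 2 ^ (#|X| - 1).
Proof.
have [->|[x0 Hx0]] := set_0Vmem X.
  rewrite cards0 /= (_ : [set S in powerset set0 | ~~ odd #|S|] = [set set0]) ?cards1 //.
  apply/setP=> S; rewrite !inE subset0; case: eqP => // ->; by rewrite cards0.
pose t (S : {set T}) := if x0 \in S then S :\ x0 else x0 |: S.
have tK : involutive t.
  move=> S; rewrite /t; case: (boolP (x0 \in S)) => h.
  - by rewrite !inE eqxx /= setD1K.
  - by rewrite !inE eqxx /= setU1K.
have tinj : injective t := inv_inj tK.
pose E := [set S in powerset X | ~~ odd #|S|].
pose O := [set S in powerset X | odd #|S|].
have EO : t @: E = O.
  apply/setP=> S; apply/imsetP/idP.
  - case=> S' ; rewrite !inE => /andP[sub ev] ->.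
    rewrite /t toggle_card; case: ifP => h.
    + rewrite (subset_trans (subD1set _ _)) //=.
      have : 0 < #|S'| by apply/card_gt0P; exists x0.
      by case: #|S'| ev => [|k] //= ev _; rewrite negbK in ev.
    + by rewrite subUset sub1set Hx0 sub /=.
  - rewrite !inE => /andP[sub od]; exists (t S); last by rewrite tK.
    rewrite !inE /t toggle_card; case: ifP => h.
    + rewrite (subset_trans (subD1set _ _)) //=.
      by case: #|S| od.
    + by rewrite subUset sub1set Hx0 sub /= negbK.
have cardEO : #|E| = #|O| by rewrite -EO card_imset.
have : #|E| + #|O| = 2 ^ #|X|.
  rewrite -card_powerset -(cardsID [set S : {set T} | odd #|S|] (powerset X)).
  rewrite addnC; congr (_ + _); apply: eq_card => S; rewrite !inE andbC //.
have : 0 < #|X| by apply/card_gt0P; exists x0.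
case: #|X| => [|k] // _.
rewrite subSS subn0 expnS cardEO; lia.
Qed.
Lemma card_tuple_fam (T : finType) n (F : 'I_n -> {set T}) :
  #|[set s : n.-tuple T | [forall i, tnth s i \in F i]]| = \prod_(i < n) #|F i|.
Proof.
rewrite -(cardsXn F).
have inj : injective (fun f : {dffun forall i : 'I_n, T} => [tuple f i | i < n]).
  move=> f g /= e; apply/ffunP => i.
  by rewrite -[f i](tnth_mktuple f) -[g i](tnth_mktuple g) e.
rewrite -(card_imset _ inj); apply: eq_card => s; rewrite !inE.
apply/forallP/imsetP.
- move=> H; exists [ffun i => tnth s i].
  + by apply/setXnP => i; rewrite ffunE.
  + by apply: eq_from_tnth => i; rewrite tnth_mktuple ffunE.
- case=> f /setXnP Hf -> i; by rewrite tnth_mktuple.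
Qed.
Section Count.
Variables (m : nat) (J : 'I_m -> nat).
Local Notation T := ('I_m * {set 'I_m})%type.
Local Notation n := (Elen J).

Lemma sum_enum (f : 'I_m -> nat) : sumn [seq f k | k <- enum 'I_m] = \sum_(k < m) f k.
Proof. by rewrite sumnE big_map big_enum. Qed.

Lemma size_pat : size (Epattern J) == n.
Proof.
rewrite /Epattern size_flatten /shape -map_comp.
rewrite (eq_map (g := fun k => (J k).-1)); last by move=> k /=; rewrite size_nseq.
by rewrite sum_enum.
Qed.

Definition pt : n.-tuple 'I_m := Tuple size_pat.

Lemma count_pat (X : {set 'I_m}) : count (mem X) (Epattern J) = \sum_(k in X) (J k).-1.
Proof.
rewrite /Epattern count_flatten -map_comp.
rewrite (eq_map (g := fun k => (k \in X) * (J k).-1)); last by move=> k /=; rewrite count_nseq.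
rewrite sum_enum [RHS]big_mkcond /=; apply: eq_bigr => k _; by case: ifP => _; rewrite ?mul1n ?mul0n.
Qed.

Definition Q (X : {set 'I_m}) (e : T) : bool :=
  if e.1 \in X then (e.2 \subset X) && ~~ odd #|e.2| else e.2 == set0.

Definition EX (X : {set 'I_m}) : {set n.-tuple T} :=
  [set s : n.-tuple T | ([seq e.1 | e <- s] == Epattern J) && all (Q X) s].

Lemma card_EX X : #|EX X| = (2 ^ (#|X| - 1)) ^ (\sum_(k in X) (J k).-1).
Proof.
pose Sset (q : 'I_m) : {set {set 'I_m}} :=
  if q \in X then [set S in powerset X | ~~ odd #|S|] else [set set0].
pose F (i : 'I_n) : {set T} := (pair (tnth pt i)) @: Sset (tnth pt i).
have -> : EX X = [set s : n.-tuple T | [forall i, tnth s i \in F i]].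
  apply/setP => s; rewrite !inE.
  have -> : ([seq e.1 | e <- s] == Epattern J) = ([tuple of map fst s] == pt).
    by rewrite -val_eqE.
  apply/andP/forallP.
  - case=> /eqP e /all_tnthP HQ i.
    have e1 : (tnth s i).1 = tnth pt i by rewrite -e tnth_map.
    apply/imsetP; exists (tnth s i).2; last by rewrite -e1; case: (tnth s i).
    move: (HQ i); rewrite /Q /Sset e1; case: (_ \in X); rewrite !inE // powersetE.
  - move=> H; split.
    + apply/eqP/eq_from_tnth => i; rewrite tnth_map.
      by case/imsetP: (H i) => S _ ->.
    + apply/all_tnthP => i; case/imsetP: (H i) => S; rewrite /Q /Sset => HS -> /=.
      by move: HS; case: (_ \in X); rewrite !inE.
rewrite card_tuple_fam.
have pinj q : injective (@pair 'I_m {set 'I_m} q) by move=> x y [].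
have cF i : #|F i| = (2 ^ (#|X| - 1)) ^ (tnth pt i \in X).
  rewrite /F card_imset; last exact: pinj.
  rewrite /Sset; case: (_ \in X); by rewrite ?even_subsets ?cards1.
rewrite (eq_bigr _ (fun i _ => cF i)).
rewrite -count_pat -sumn_count sumnE big_map -[Epattern J]/(tval pt) big_tuple expn_sum //.
Qed.
End Count.

Lemma pairwise_all (T : Type) (P : pred T) (r : rel T) (s : seq T) :
  (forall x y, P x -> P y -> r x y) -> all P s -> pairwise r s.
Proof.
move=> H; elim: s => //= x s IH /andP[Px Ps]; rewrite IH // andbT.
by apply: sub_all Ps => y Py; apply: H.
Qed.

Lemma pairwise_two (T : eqType) (r : rel T) (s : seq T) x y :
  pairwise r s -> x \in s -> y \in s -> x != y -> r x y || r y x.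
Proof.
elim: s => //= z s IH /andP[rz ps]; rewrite !in_cons.
case/orP => [/eqP->|xs]; case/orP => [/eqP->|ys].
- by rewrite eqxx.
- by move=> _; rewrite (allP rz y ys).
- by move=> _; rewrite (allP rz x xs) orbT.
- exact: IH.
Qed.

Section Main.
Variables (m : nat) (a b c : {set 'I_m}).
Hypothesis hlam : DJ_class a b c.

Definition part (x : 'I_m) := if x \in a then a else if x \in b then b else c.
Definition isPart (X : {set 'I_m}) := [|| X == a, X == b | X == c].

Lemma parts : [/\ [disjoint a & b], [disjoint a & c], [disjoint b & c] & a :|: b :|: c == setT].
Proof. by case/and4P: hlam => h1 h2 h3 /andP[h4 _]; split. Qed.
Lemma dab : [disjoint a & b]. Proof. by case: parts. Qed.
Lemma dac : [disjoint a & c]. Proof. by case: parts. Qed.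
Lemma dbc : [disjoint b & c]. Proof. by case: parts. Qed.
Lemma cov x : x \in a :|: b :|: c.
Proof. by case: parts => _ _ _ /eqP ->; rewrite inE. Qed.

Lemma part_mem x : x \in part x.
Proof.
by rewrite /part; case: ifP => // ha; case: ifP => // hb; have := cov x; rewrite !inE ha hb.
Qed.

Lemma isPart_part x : isPart (part x).
Proof. by rewrite /part /isPart; case: ifP => _; [rewrite eqxx | case: ifP => _; rewrite !eqxx ?orbT]. Qed.

Lemma part_eq X x : isPart X -> x \in X -> part x = X.
Proof.
rewrite /part; case/or3P => /eqP -> h.
- by rewrite h.
- by rewrite (disjointFl dab h) h.
- by rewrite (disjointFl dac h) (disjointFl dbc h).
Qed.

Lemma compat_iff e : eset_compat a b c e = ~~ odd #|e.2| && (e.2 \subset part e.1).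
Proof.
rewrite /eset_compat; congr andb; rewrite /part.
case: (boolP (e.1 \in a)) => ha.
  by rewrite (disjointFr dab ha) (disjointFr dac ha) /= orbF.
case: (boolP (e.1 \in b)) => hb /=.
  by rewrite (disjointFr dbc hb) /= orbF.
have := cov e.1; rewrite !inE (negbTE ha) (negbTE hb) /= => -> //.
Qed.

Lemma lam_iff p q : lam_equiv a b c p q = (part p == part q).
Proof.
have Pa : isPart a by rewrite /isPart eqxx.
have Pb : isPart b by rewrite /isPart eqxx orbT.
have Pc : isPart c by rewrite /isPart eqxx !orbT.
apply/idP/eqP.
- case/or3P => /andP[hp hq].
  + by rewrite (part_eq Pa hp) (part_eq Pa hq).
  + by rewrite (part_eq Pb hp) (part_eq Pb hq).
  + by rewrite (part_eq Pc hp) (part_eq Pc hq).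
- move=> e; have := part_mem p; have := part_mem q; rewrite -e.
  have := isPart_part p; case/or3P => /eqP -> hq hp; by rewrite /lam_equiv hp hq ?orbT.
Qed.

End Main.

Section Final.
Variables (m : nat) (a b c : {set 'I_m}) (J : 'I_m -> nat).
Hypothesis hlam : DJ_class a b c.

Lemma Q_set0 (X : {set 'I_m}) (e : 'I_m * {set 'I_m}) : Q set0 e -> Q X e.
Proof. by rewrite /Q inE; case: (_ \in X) => // /eqP ->; rewrite sub0set cards0. Qed.

Lemma EX_set0 (X : {set 'I_m}) : EX J set0 \subset EX J X.
Proof.
apply/subsetP => s; rewrite !inE => /andP[-> H] /=.
by apply: sub_all H => e; apply: Q_set0.
Qed.

Lemma EX_I (X Y : {set 'I_m}) : [disjoint X & Y] -> EX J X :&: EX J Y = EX J set0.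
Proof.
move=> dXY; apply/eqP; rewrite eqEsubset subsetI (EX_set0 X) (EX_set0 Y) !andbT.
apply/subsetP => s; rewrite !inE => /andP[/andP[-> HX] /andP[_ HY]] /=.
apply/allP => e es; have := allP HX e es; have := allP HY e es.
rewrite /Q inE; case: (boolP (e.1 \in X)) => hX //.
by rewrite (disjointFr dXY hX).
Qed.

Lemma EX_sub (X : {set 'I_m}) : isPart a b c X -> EX J X \subset Etilde a b c J.
Proof.
move=> PX; apply/subsetP => s; rewrite !inE /in_Etilde => /andP[-> H] /=.
apply/andP; split.
- apply: sub_all H => e; rewrite compat_iff // /Q.
  case: (boolP (e.1 \in X)) => h.
  + by rewrite (part_eq hlam PX h) andbC.
  + by move/eqP ->; rewrite cards0 sub0set.
- apply: pairwise_all H => e f; rewrite /Q /type1_rel lam_iff //.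
  case: (e.1 \in X) / boolP => he; last by move=> ->.
  case: (f.1 \in X) / boolP => hf; last by move=> _ ->; rewrite orbT.
  by rewrite (part_eq hlam PX he) (part_eq hlam PX hf) eqxx !orbT.
Qed.

Lemma Etilde_sub : Etilde a b c J \subset EX J a :|: EX J b :|: EX J c.
Proof.
apply/subsetP => s; rewrite inE /in_Etilde => /and3P[hp hc hr].
case: (boolP (all (fun e : 'I_m * {set 'I_m} => e.2 == set0) s)) => h0.
  have : s \in EX J a.
    rewrite inE hp /=; apply: sub_all h0 => e he; apply: Q_set0.
    by rewrite /Q inE.
  by rewrite !inE => ->.
case/allPn: h0 => e0 e0s ne0.
have sX : s \in EX J (part a b c e0.1).
  rewrite inE hp /=; apply/allP => e es.
  case: (boolP (e.2 == set0)) => h2.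
    by rewrite /Q (eqP h2) sub0set cards0; case: ifP.
  have pe : part a b c e.1 = part a b c e0.1.
    case: (boolP (e == e0)) => [/eqP -> //|nee].
    have := pairwise_two hr es e0s nee; rewrite /type1_rel (negbTE h2) (negbTE ne0) /=.
    by rewrite !lam_iff // => /orP[] /eqP.
  have := allP hc e es; rewrite compat_iff // /Q pe => /andP[ev sub].
  have he : e.1 \in part a b c e0.1 by rewrite -pe part_mem.
  by rewrite /Q he sub ev.
have := isPart_part a b c e0.1; case/or3P => /eqP E; rewrite E in sX; by rewrite !in_setU sX ?orbT.
Qed.

Lemma card_Z : #|EX J set0| = 1.
Proof. by rewrite card_EX cards0 sub0n expn0 exp1n. Qed.

Lemma EX_pos (X : {set 'I_m}) : 0 < #|EX J X|.
Proof. by rewrite card_EX expn_gt0 expn_gt0. Qed.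

Lemma wpartE (X : {set 'I_m}) : wpart J X = \sum_(k in X) (J k).-1.
Proof. by rewrite /wpart; case: eqP => // ->; rewrite big_set0. Qed.

End Final.

Theorem proposition6 (m : nat) (hm : 3 <= m) (a b c : {set 'I_m})
  (hlam : DJ_class a b c) (J : 'I_m -> nat) (hJ : forall k, 0 < J k) :
  #|Etilde a b c J| =
    (2 ^ (#|a| - 1)) ^ (wpart J a) + (2 ^ (#|b| - 1)) ^ (wpart J b)
    + (2 ^ (#|c| - 1)) ^ (wpart J c) - 2.
Proof.
have Pa : isPart a b c a by rewrite /isPart eqxx.
have Pb : isPart a b c b by rewrite /isPart eqxx orbT.
have Pc : isPart a b c c by rewrite /isPart eqxx !orbT.
have -> : Etilde a b c J = EX J a :|: EX J b :|: EX J c.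
  apply/eqP; rewrite eqEsubset Etilde_sub // !subUset !EX_sub //.
rewrite !wpartE -!card_EX cardsU setIUl !EX_I ?(dab hlam) ?(dac hlam) ?(dbc hlam) //.
rewrite setUid cardsU EX_I ?(dab hlam) // card_Z.
have := EX_pos J a; have := EX_pos J b; have := EX_pos J c; lia.
Qed.
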